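(* Let $L$ be a finite lattice, $a\in L$, and $\varphi\in M_1(L)$. Then the function $x\mapsto\lambda(\varphi;a,x)$ belongs to $M_1(L)$.
   Context: $L$ is a finite lattice with join $\vee$ and meet $\wedge$. $M_1(L)$ is the set of nonnegative monotone (order-preserving) real functions on $L$. A path from $a$ to $b$ in $L$ is a sequence $H=(h_0,h_1,\dots,h_m)$ of distinct elements of $L$ with $h_0=a$, $h_m=b$ ($m\ge0$), viewed as a tree with edges $\{h_{i-1},h_i\}$; for it $\varphi(H)=\sum_{i=0}^m\varphi(h_i)-\sum_{i=1}^m\varphi(h_{i-1}\vee h_i)$. Define $\lambda(\varphi;a,b)=\max\{\varphi(H): H\text{ a path from }a\text{ to }b\}$. *)

(* Defs.v *)
From mathcomp Require Import all_boot all_order all_algebra.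
Set Implicit Arguments. Unset Strict Implicit. Unset Printing Implicit Defensive.
Import Order.TTheory GRing.Theory Num.Theory.
Local Open Scope order_scope.
Local Open Scope ring_scope.

Section Lam.
Variables (d : Order.disp_t) (L : finLatticeType d) (R : realFieldType).

Definition M1 (phi : L -> R) : Prop :=
  (forall x, 0 <= phi x) /\ (forall x y : L, (x <= y)%O -> phi x <= phi y).

Definition is_path (a b : L) (H : seq L) : bool :=
  [&& H != [::], head a H == a, last a H == b & uniq H].

Definition path_val (phi : L -> R) (H : seq L) : R :=
  \sum_(h <- H) phi h
  - \sum_(e <- zip H (behead H)) phi (e.1 `|` e.2)%O.

(* all candidate sequences of length 1..#|L| (every path of distinct
   elements has at most #|L| vertices) *)
Definition all_seqs : seq (seq L) :=
  flatten [seq [seq val t | t : n.-tuple L] | n <- iota 1 #|L|].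

Definition paths (a b : L) : seq (seq L) := [seq H <- all_seqs | is_path a b H].

(* the trivial path [a] or [a; b] is a path, used as the base value *)
Definition base_path (a b : L) : seq L := if a == b then [:: a] else [:: a; b].

Definition lambda (phi : L -> R) (a b : L) : R :=
  \big[Num.max/path_val phi (base_path a b)]_(H <- paths a b) path_val phi H.

End Lam.

(* Main.v *)
Require Import Defs.
From mathcomp Require Import all_boot all_order all_algebra.
From mathcomp Require Import lra.
Import Order.TTheory GRing.Theory Num.Theory.

Section Aux.
Local Open Scope order_scope.
Local Open Scope ring_scope.
Variables (d : Order.disp_t) (L : finLatticeType d) (R : realFieldType).
Variable (phi : L -> R).
Hypothesis Mphi : M1 phi.

Lemma pv1 (x : L) : path_val phi [:: x] = phi x.
Proof. by rewrite /path_val /= big_cons big_nil big_nil addr0 subr0. Qed.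

Lemma pv2 (x y : L) s : path_val phi [:: x, y & s] =
  phi x - phi (x `|` y)%O + path_val phi (y :: s).
Proof.
rewrite /path_val /= !big_cons /=.
rewrite opprD; set A := \sum_(_ <- _) _; set B := \sum_(_ <- _) _.
by rewrite addrACA addrA.
Qed.

Lemma pv_cat (x : L) s z t : path_val phi ((x :: s) ++ z :: t) =
  path_val phi (x :: s) - phi (last x s `|` z)%O + path_val phi (z :: t).
Proof.
elim: s x => [|y s IH] x /=; first by rewrite pv2 pv1.
by rewrite pv2 IH pv2 /= !addrA.
Qed.

Lemma pv_le_head (z : L) t : path_val phi (z :: t) <= phi z.
Proof.
elim: t z => [|w t IH] z; first by rewrite pv1.
rewrite pv2; have h1 := IH w.
have h2 : phi w <= phi (z `|` w)%O by apply: Mphi.2; exact: leUr.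
lra.
Qed.

Lemma path_in {a b : L} {H} : is_path a b H -> H \in paths a b.
Proof.
move=> Hp; rewrite mem_filter Hp /=.
case/and4P: Hp => Hne _ _ Hu.
apply/flattenP; exists [seq val t | t : (size H).-tuple L].
  apply/mapP; exists (size H) => //; rewrite mem_iota /=.
  rewrite add1n ltnS -(card_uniqP Hu) max_card andbT.
  by rewrite (card_uniqP Hu) lt0n size_eq0.
by apply/imageP; exists (in_tuple H).
Qed.

Lemma lam_ge {a b : L} {H} : is_path a b H -> path_val phi H <= lambda phi a b.
Proof.
move=> Hp; rewrite /lambda.
have := le_bigmax_seq (path_val phi (base_path a b)) H xpredT (fun H => path_val phi H) (path_in Hp) is_true_true.
exact.
Qed.

Lemma base_ok {a b : L} : is_path a b (base_path a b).
Proof.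
rewrite /base_path; case: eqP => [->|/eqP ne]; rewrite /is_path /=; first by rewrite !eqxx.
by rewrite !eqxx /= inE ne.
Qed.

Lemma lam_le (a b : L) z :
  (forall H, is_path a b H -> path_val phi H <= z) -> lambda phi a b <= z.
Proof.
move=> Hz; rewrite /lambda big_seq; apply: bigmax_le; first exact: Hz (@base_ok a b).
by move=> H; rewrite mem_filter => /andP[/Hz].
Qed.

Lemma ext {a x y : L} {H} : is_path a x H -> (x <= y)%O ->
  exists2 H', is_path a y H' & path_val phi H <= path_val phi H'.
Proof.
case/and4P=> Hne /eqP Hh /eqP Hl Hu xy.
case yin: (y \in H).
  case/splitPr: yin Hne Hh Hl Hu => p q _ Hh Hl Hu.
  exists (p ++ [:: y]).
    rewrite /is_path; apply/and4P; split.
    - by case: p {Hh Hl Hu}.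
    - by case: p Hh {Hl Hu} => [|? ?] /= ->.
    - by rewrite last_cat.
    - by move: Hu; rewrite -cat1s catA cat_uniq => /andP[].
  case: q Hh Hl Hu => [|z q] Hh Hl Hu; first by rewrite lexx.
  have h1 := pv_le_head z q.
  have h2 : phi z <= phi (y `|` z)%O by apply: Mphi.2; exact: leUr.
  case: p Hh Hl Hu => [|h' p] Hh Hl Hu.
    rewrite /= pv2 (pv1 y); lra.
  have E : (h' :: p) ++ [:: y, z & q] = (h' :: (p ++ [:: y])) ++ z :: q by rewrite /= -catA.
  rewrite E pv_cat last_cat /=; lra.
case: H Hne Hh Hl Hu yin => // h s _ /= Hh Hl Hu yin.
exists ((h :: s) ++ [:: y]).
  rewrite /is_path; apply/and4P; split => //=.
  - by rewrite Hh.
  - by rewrite last_cat.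
  - move/negbT: yin; rewrite inE negb_or => /andP[yh ys]; case/andP: Hu => hs us.
    by rewrite mem_cat cat_uniq inE negb_or hs us /= (eq_sym h) yh /= orbF andbT.
rewrite pv_cat pv1 Hl (join_r xy); lra.
Qed.

Lemma nn_via (a x : L) H : is_path a x H -> 0 <= path_val phi H -> 0 <= lambda phi a x.
Proof. move=> Hp h; have := lam_ge Hp; exact: le_trans. Qed.

Lemma main (a : L) : M1 (fun x => lambda phi a x).
Proof.
have [p0 pm] := Mphi.
split; last first.
  move=> x y xy; apply: lam_le => H Hp; have [H' Hp' le] := ext Hp xy.
  exact: le_trans le (lam_ge Hp').
move=> x; case ax: (a <= x)%O.
  case: (eqVneq a x) => [<-|nax].
    by apply: (@nn_via _ _ _ (@base_ok a a)); rewrite /base_path eqxx pv1.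
  apply: (@nn_via _ _ [:: a; x]).
    by rewrite /is_path /= !eqxx inE nax.
  by rewrite pv2 pv1 (join_r ax) addrNK.
have nax : a != x by apply: contraFN ax => /eqP ->.
case xa: (x <= a)%O.
  apply: (@nn_via _ _ [:: a; x]).
    by rewrite /is_path /= !eqxx inE nax.
  by rewrite pv2 pv1 (join_l xa) subrr add0r.
apply: (@nn_via _ _ [:: a; (a `&` x)%O; x]).
  rewrite /is_path /= !eqxx /= !inE !negb_or nax (eq_sym a) eq_meetl ax.
  by rewrite eq_meetr xa.
rewrite !pv2 pv1 (join_l (leIl _ _)) (join_r (leIr _ _)).
by rewrite subrr add0r addrNK.
Qed.

End Aux.

Theorem lemma3p10 (d : Order.disp_t) (L : finLatticeType d) (R : realFieldType)
  (a : L) (phi : L -> R) :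
  M1 phi -> M1 (fun x => lambda phi a x).
Proof. move=> Mphi; exact: main. Qed.
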